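(* Let $p$ be an odd prime, $v\in\mathbb{N}$ and $z\in\mathbb{Z}\setminus\{0,-1\}$. Let $c_v,\tilde c_v$ be defined by $c_0=\tilde c_0=1$ and, for $v\ge1$, $c_v=\frac{1}{z}\sum_{j=1}^{v}e_j^{(2v-1)}c_{v-j}$ and $\tilde c_v=-\frac{1}{z+1}\sum_{j=1}^{v}e_j^{(2v-1)}\tilde c_{v-j}$. If $\gcd(p,z)=1$ then $$\sum_{k=0}^{p-1}(2k+1)^{2v}D_k(z)\equiv c_v\left(\frac{-z}{p}\right)\pmod p,$$ and if $\gcd(p,z+1)=1$ then $$\sum_{k=0}^{p-1}(-1)^k(2k+1)^{2v}D_k(z)\equiv \tilde c_v\left(\frac{z+1}{p}\right)\pmod p.$$
   Context: $D_n(z)=\sum_{k=0}^{n}\binom{n}{k}\binom{n+k}{k}z^k$ (Delannoy polynomials). For $s\in\mathbb{N}$ and $1\le j\le\lfloor (s+1)/2\rfloor$, $e_j^{(s)}=\binom{s}{2j}2^{2j-1}+\binom{s}{2j-1}2^{2j-2}$. $\left(\frac{\cdot}{p}\right)$ is the Legendre symbol. A congruence $a/b\equiv c\pmod p$ with $p\nmid b$ means $a\equiv bc\pmod p$; the denominators of $c_v$ (resp. $\tilde c_v$) at the integer $z$ divide a power of $z$ (resp. $z+1$). *)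

(* Defs.v *)
From mathcomp Require Import all_boot all_order all_algebra.
Set Implicit Arguments. Unset Strict Implicit. Unset Printing Implicit Defensive.
Import Order.TTheory GRing.Theory Num.Theory.
Local Open Scope ring_scope.

Definition delannoy (n : nat) (z : int) : int :=
  \sum_(k < n.+1) ('C(n, k) * 'C(n + k, k))%:R * z ^+ k.

(* e_j^{(s)} = C(s,2j) 2^{2j-1} + C(s,2j-1) 2^{2j-2}  (used for j >= 1). *)
Definition ecoef (j s : nat) : nat :=
  ('C(s, 2 * j) * 2 ^ (2 * j - 1) + 'C(s, 2 * j - 1) * 2 ^ (2 * j - 2))%N.

(* Given the list s = [c_0; ...; c_{v-1}] (v = size s), compute
   c_v = w * sum_{j=1}^{v} e_j^{(2v-1)} c_{v-j}. *)
Definition c_step (w : rat) (s : seq rat) : rat :=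
  let v := size s in
  w * \sum_(1 <= j < v.+1) (ecoef j (2 * v - 1))%:R * s`_(v - j).

Fixpoint cs (w : rat) (n : nat) : seq rat :=
  if n is n'.+1 then rcons (cs w n') (c_step w (cs w n')) else [:: 1].

Definition cc (z : int) (v : nat) : rat := (cs (z%:~R)^-1 v)`_v.
Definition cct (z : int) (v : nat) : rat := (cs (- ((z + 1)%:~R)^-1) v)`_v.

Definition legendre (a : int) (p : nat) : int :=
  if (p%:Z %| a)%Z then 0
  else if [exists x : 'I_p, (p%:Z %| (x%:Z) ^+ 2 - a)%Z] then 1 else -1.

(* Congruence of rationals modulo p (p-adic sense): p divides the
   numerator of x - y in lowest terms. *)
Definition ratcong (p : nat) (x y : rat) : Prop := (p%:Z %| numq (x - y))%Z.

(* Main.v *)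
Require Import Defs.
From mathcomp Require Import all_boot all_order all_algebra all_field all_solvable.
From mathcomp Require Import zify ring.
Set Implicit Arguments. Unset Strict Implicit. Unset Printing Implicit Defensive.
Import Order.TTheory GRing.Theory Num.Theory.

Lemma tu_eq k j : 'C(k, j) * 'C(k + j, j) = 'C(j.*2, j) * 'C(k + j, j.*2).
Proof.
have [jk|kj] := leqP j k; last first.
  by rewrite (bin_small kj) (@bin_small (k + j) j.*2) ?mul0n ?muln0 //; lia.
have H0 : 0 < j`! * j`! * (k - j)`! by rewrite !muln_gt0 !fact_gt0.
apply/eqP; rewrite -(eqn_pmul2r H0); apply/eqP.
have e1 := bin_fact (leq_addl k j). rewrite addnK in e1.
have e2 := bin_fact jk.
have e3 : j.*2 <= k + j by rewrite -addnn leq_add2r.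
have e4 := bin_fact e3.
have e5 := bin_fact (leq_addl j j). rewrite addnK addnn in e5.
have ee : k + j - j.*2 = k - j by lia.
rewrite ee in e4.
transitivity (k + j)`!.
  rewrite -e1 -e2. ring.
rewrite -e4 -e5. ring.
Qed.

Lemma hXY i : (i+1) * 'C((i.*2).+2, i.+1) = 2 * (2*i+1) * 'C(i.*2, i).
Proof.
have h1 := mul_bin_diag (i.*2).+2 i.
have h2 := mul_bin_down (i.*2).+1 i.
rewrite /= in h1 h2.
have e2 : (i.*2).+1 - i = i.+1 by lia.
rewrite e2 in h2.
move: h1 h2. set W := 'C(_, i). set X' := 'C(_, i.+1). set Y' := 'C(_, i).
rewrite -!mul2n. nia.
Qed.

Lemma perj n i :
  'C((i.*2).+2, i.+1) * ((n+2) * 'C((n+i).+3, (i.*2).+2) + (n+1) * 'C((n+i).+1, (i.*2).+2))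
  = 'C((i.*2).+2, i.+1) * ((2*n+3) * 'C((n+i).+2, (i.*2).+2))
    + 2 * (2*n+3) * ('C(i.*2, i) * 'C((n+i).+1, i.*2)).
Proof.
have hX := hXY i.
have PA := binS (n + i).+2 (i.*2).+1.
have PB := binS (n + i).+1 (i.*2).
have PC := binS (n + i).+1 (i.*2).+1.
have P4 := mul_bin_diag (n + i).+2 (i.*2).
rewrite /= in P4.
move: hX PA PB PC P4.
set X := 'C((i.*2).+2, i.+1). set Y := 'C(i.*2, i).
set a3 := 'C((n + i).+3, _). set a2 := 'C((n + i).+2, (i.*2).+2).
set a1 := 'C((n + i).+1, (i.*2).+2). set b2 := 'C((n + i).+2, (i.*2).+1).
set b1 := 'C((n + i).+1, (i.*2).+1). set u := 'C((n + i).+1, i.*2).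
rewrite -!mul2n => hX PA PB PC P4.
rewrite PA PB PC.
have h5 : (2*i+1) * (b1 + (n+2)*u) = (i+1)*(2*n+3)*u.
  rewrite PB in P4. nia.
have key : (i+1) * (2*i+1) * (X * (b1 + (n+2) * u)) = (i+1)*(2*i+1) * (2 * (2*n+3) * (Y * u)).
  have -> : (i+1) * (2*i+1) * (X * (b1 + (n+2) * u)) = ((i+1) * X) * ((2*i+1) * (b1 + (n+2)*u)) by ring.
  rewrite hX h5. ring.
have key2 : X * (b1 + (n+2) * u) = 2 * (2*n+3) * (Y * u).
  apply/eqP; rewrite -(eqn_pmul2l (_ : 0 < (i+1)*(2*i+1))) ?key //. lia.
nia.
Qed.

Local Open Scope ring_scope.

Definition FD (z : int) (k j : nat) : int := ('C(j.*2, j) * 'C(k + j, j.*2))%:R * z ^+ j.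

Lemma delannoyE k z : delannoy k z = \sum_(j < k.+1) FD z k j.
Proof. by apply: eq_bigr => j _; rewrite tu_eq. Qed.

Lemma delannoyEN N k z : (k < N)%N -> delannoy k z = \sum_(j < N) FD z k j.
Proof.
move=> kN; rewrite delannoyE -(subnKC kN) big_split_ord /=.
rewrite [X in _ = _ + X]big1 ?addr0 // => i _.
rewrite /FD (@bin_small (k + _)) ?muln0 ?mul0r //=. lia.
Qed.

Lemma FD0 z k : FD z k 0 = 1.
Proof. by rewrite /FD /= !bin0 expr0 mulr1. Qed.

Lemma perjZ n i z :
  (n+2)%:R * FD z (n+2) i.+1 + (n+1)%:R * FD z n i.+1 =
  (2*n+3)%:R * FD z (n+1) i.+1 + 2 * (2*n+3)%:R * (z * FD z (n+1) i).
Proof.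
have H := perj n i.
have := congr1 (fun x : nat => (x%:R : int) * z ^+ i.+1) H.
rewrite /FD.
have e1 : (n + 2 + i.+1 = (n+i).+3)%N by lia.
have e2 : (n + i.+1 = (n+i).+1)%N by lia.
have e3 : (n + 1 + i.+1 = (n+i).+2)%N by lia.
have e4 : (n + 1 + i = (n+i).+1)%N by lia.
rewrite e1 e2 e3 e4 doubleS /= exprS.
move/eqP; rewrite -subr_eq0 => /eqP H'.
apply/eqP; rewrite -subr_eq0 -H'; apply/eqP.
rewrite ?(natrD, natrM). ring.
Qed.

Lemma delannoy_rec n z : (n+2)%:R * delannoy (n+2) z + (n+1)%:R * delannoy n z
   = (2*z+1) * (2*n+3)%:R * delannoy (n+1) z.
Proof.
set N := (n + 3)%N.
rewrite (@delannoyEN N.+1 (n+2)) ?(@delannoyEN N.+1 n) ; try (rewrite /N; lia).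
rewrite mulrDl mulrDl mul1r.
rewrite {1}(@delannoyEN N (n+1)); last (rewrite /N; lia).
rewrite (@delannoyEN N.+1 (n+1)); last (rewrite /N; lia).
rewrite !big_distrr -!big_split /= !big_ord_recl /=.
have -> : \sum_(i < N) (2 * z * (2 * n + 3)%:R * FD z (n+1) i) = \sum_(i < N) (2 * (2 * n + 3)%:R * (z * FD z (n+1) i)).
  by apply: eq_bigr => i _; ring.
have -> : \sum_(i < N) ((n + 2)%:R * FD z (n+2) (bump 0 i) + (n + 1)%:R * FD z n (bump 0 i))
   = \sum_(i < N) ((2*n+3)%:R * FD z (n+1) i.+1 + 2 * (2*n+3)%:R * (z * FD z (n+1) i)).
  by apply: eq_bigr => i _; rewrite perjZ.
rewrite big_split /= !FD0.
have -> : \sum_(i < N) (2 * n + 3)%:R * FD z (n + 1) (bump 0 i) = \sum_(i < N) (2 * n + 3)%:R * FD z (n + 1) i.+1.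
  by apply: eq_bigr => i _; rewrite /bump add1n.
rewrite ?natrD ?natrM. ring.
Qed.

Lemma delannoy0 z : delannoy 0 z = 1.
Proof. by rewrite /delannoy big_ord1 /= expr0 mulr1. Qed.

Lemma delannoy1 z : delannoy 1 z = 2 * z + 1.
Proof. rewrite /delannoy !big_ord_recr big_ord0 /= expr0 expr1. rewrite /= !bin0 !bin1. ring. Qed.

Lemma delannoy_refl k z : delannoy k (-1 - z) = (-1) ^+ k * delannoy k z.
Proof.
suff H : forall n, delannoy n (-1 - z) = (-1) ^+ n * delannoy n z /\
   delannoy n.+1 (-1 - z) = (-1) ^+ n.+1 * delannoy n.+1 z by case: (H k).
elim=> [|n [IH1 IH2]].
  by rewrite !delannoy0 delannoy1 delannoy1 expr0 mul1r expr1; split=> //; ring.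
split=> //.
have R1 := delannoy_rec n (-1 - z).
have R2 := delannoy_rec n z.
have e1 : (n + 2 = n.+2)%N by lia.
have e2 : (n + 1 = n.+1)%N by lia.
rewrite e1 e2 IH1 IH2 in R1. rewrite e1 e2 in R2.
apply: (@mulfI _ (n.+2)%:R); first by rewrite pnatr_eq0.
have -> : n.+2%:R * delannoy n.+2 (-1 - z) = (2 * (-1 - z) + 1) * (2 * n + 3)%:R * ((-1) ^+ n.+1 * delannoy n.+1 z) - (n + 1)%:R * ((-1) ^+ n * delannoy n z).
  by rewrite -R1; ring.
have -> : n.+2%:R * ((-1) ^+ n.+2 * delannoy n.+2 z) = (-1) ^+ n.+2 * ((2 * z + 1) * (2 * n + 3)%:R * delannoy n.+1 z - (n + 1)%:R * delannoy n z).
  by rewrite -R2; ring.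
rewrite !exprS. ring.
Qed.

Lemma tele (R : comRingType) (D f : nat -> R) (a : R) (p : nat) :
 (forall k, (k.+1)%:R * D k.+1 + k%:R * D k.-1 = a * (2*k+1)%:R * D k) ->
 \sum_(k < p) D k * ((k.+1)%:R * f k.+1 + k%:R * f k.-1 - a * (2*k+1)%:R * f k)
   = - (p%:R * (f p.-1 * D p - f p * D p.-1)).
Proof.
move=> rec.
pose T k := k%:R * (f k.-1 * D k - f k * D k.-1).
have step k : D k * ((k.+1)%:R * f k.+1 + k%:R * f k.-1 - a * (2*k+1)%:R * f k) = - (T k.+1 - T k).
  rewrite /T /=. 
  have : (k.+1)%:R * D k.+1 = a * (2*k+1)%:R * D k - k%:R * D k.-1 by rewrite -rec; ring.
  move=> H. 
  have -> : k.+1%:R * (f k * D k.+1 - f k.+1 * D k) = f k * (k.+1%:R * D k.+1) - k.+1%:R * f k.+1 * D k by ring.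
  rewrite H. ring.
under eq_bigr => k _ do rewrite step.
rewrite sumrN.
rewrite -(big_mkord xpredT (fun k => T k.+1 - T k)) telescope_sumr // /T mul0r subr0.
by [].
Qed.

Lemma pair_sum (R : zmodType) (g : nat -> R) n :
  \sum_(0 <= i < (n.*2).+1) g i = g 0%N + \sum_(0 <= j < n) (g (j.*2).+1 + g (j.*2).+2).
Proof.
elim: n => [|n IH]; first by rewrite big_nat1 big_geq ?addr0.
rewrite doubleS big_nat_recr // big_nat_recr // IH big_nat_recr // !addrA. reflexivity.
Qed.

Lemma pair_ident (R : comRingType) (x : R) (w : nat) :
  (x + 1) * (x + 2) ^+ (w.*2).+1 + (x - 1) * (x - 2) ^+ (w.*2).+1
  = 2 * x ^+ (w.*2).+2 + 4 * \sum_(j < w.+1) (ecoef j.+1 (w.*2).+1)%:R * x ^+ ((w - j).*2).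
Proof.
set s := (w.*2).+1.
pose g i := ('C(s, i) * 2 ^ i)%:R * x ^+ (s - i) * ((x + 1) + (-1) ^+ i * (x - 1)).
have L : (x + 1) * (x + 2) ^+ s + (x - 1) * (x - 2) ^+ s = \sum_(i < s.+1) g i.
  rewrite !exprDn !big_distrr -big_split /=; apply: eq_bigr => i _.
  rewrite /g natrM natrX.
  have -> : (-2 : R) = (-1) * 2 by ring.
  have hm : forall y : R, y *+ 'C(s,i) = y * 'C(s,i)%:R by move=> y; rewrite mulr_natr.
  rewrite (hm (x ^+ (s - i) * 2 ^+ i)) (hm (x ^+ (s - i) * (-1 * 2) ^+ i)) exprMn.
  move: (x ^+ (s - i)) (2 ^+ i : R) ((-1) ^+ i : R) ('C(s,i)%:R : R) => a b c n.
  ring.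
rewrite L.
have -> : \sum_(i < s.+1) g i = \sum_(0 <= i < ((w.+1).*2).+1) g i.
  rewrite doubleS big_nat_recr //= big_mkord.
  rewrite [g s.+1]/g bin_small ?mul0n ?mul0r ?addr0 //.
rewrite pair_sum.
rewrite big_mkord. congr (_ + _).
  rewrite /g subn0 expr0 mul1r bin0 /= exprS.
  move: (x ^+ s) => a. ring.
rewrite big_distrr /=; apply: eq_bigr => j _.
have hj : (j <= w)%N by rewrite -ltnS.
rewrite /g /ecoef.
have e1 : (2 * j.+1 = j.*2.+2)%N by lia.
have e2 : (2 * j.+1 - 1 = j.*2.+1)%N by lia.
have e3 : (2 * j.+1 - 2 = j.*2)%N by lia.
have e4 : (s - j.*2.+1 = (w - j).*2)%N by rewrite /s; lia.
have m1 : (-1:R) ^+ j.*2 = 1 by rewrite -mul2n exprM sqrrN !expr1n.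
rewrite e2 e3 e1 e4 !exprS m1 !natrD !natrM !natrX !exprS.
have [jw|jw] := eqVneq (j : nat) w.
  rewrite jw (@bin_small s w.*2.+2); last by rewrite /s.
  move: ('C(s, w.*2.+1)%:R : R) (x ^+ (w - w).*2) (2 ^+ w.*2 : R) (x ^+ (s - w.*2.+2)) => a b c d.
  ring.
have e5 : ((w - j).*2 = (s - j.*2.+2).+1)%N by rewrite /s; lia.
rewrite e5 exprS.
move: ('C(s, j.*2.+1)%:R : R) ('C(s, j.*2.+2)%:R : R) (x ^+ (s - j.*2.+2)) (2 ^+ j.*2 : R) => a b c d.
ring.
Qed.
Local Open Scope ring_scope.

Section Fp.
Variable p : nat.
Hypothesis pr : prime p.
Hypothesis po : odd p.
Local Notation F := 'F_p.
Variable z : int.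

Definition Df k : F := (delannoy k z)%:~R.
Definition xk k : F := ((2 * k + 1)%N)%:R.
Definition Sf v : F := \sum_(k < p) xk k ^+ (2 * v) * Df k.

Lemma p0 : (p%:R : F) = 0. Proof. exact: pchar_Fp_0. Qed.

Lemma two_neq0 : (2 : F) != 0.
Proof.
have ch := pchar_Fp pr.
rewrite -[2]/(2%:R : F) -(dvdn_pcharf ch).
apply/negP => H; have := dvdn_leq (ltn0Sn 1) H; have := prime_gt1 pr.
by move: po; case: (p) => [|[|[|q]]].
Qed.

Lemma recF k : (k.+1)%:R * Df k.+1 + k%:R * Df k.-1 = ((2 * z + 1)%:~R : F) * (2*k+1)%:R * Df k.
Proof.
case: k => [|n].
  rewrite /Df delannoy1 delannoy0 /= intrD intrM rmorph1. ring.
have := congr1 (fun t : int => (t%:~R : F)) (delannoy_rec n z).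
have e1 : (n + 2 = n.+2)%N by lia.
have e2 : (n + 1 = n.+1)%N by lia.
rewrite e1 e2 /Df /= !intrD !intrM !mulrz_nat => ->.
rewrite !natrD !natrM. ring.
Qed.

Lemma stepF w : z%:~R * Sf w.+1 = \sum_(j < w.+1) (ecoef j.+1 (w.*2).+1)%:R * Sf (w - j).
Proof.
set s := (w.*2).+1.
have T := @tele _ Df (fun k => xk k ^+ s) ((2 * z + 1)%:~R) p recF.
rewrite p0 mul0r oppr0 in T.
set E := fun k => \sum_(j < w.+1) (ecoef j.+1 s)%:R * xk k ^+ (2 * (w - j)).
have hG : forall k : nat, 2 * ((k.+1)%:R * xk k.+1 ^+ s + k%:R * xk k.-1 ^+ s - (2 * z + 1)%:~R * (2 * k + 1)%:R * xk k ^+ s)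
   = 4 * (E k - z%:~R * xk k ^+ (2 * w.+1)).
  move=> k.
  have PI := pair_ident (xk k) w.
  have ex1 : xk k + 1 = 2 * (k.+1)%:R by rewrite /xk -[k.+1]addn1 ?natrD ?natrM; ring.
  have ex2 : xk k + 2 = xk k.+1 by rewrite /xk -[k.+1]addn1 ?natrD ?natrM; ring.
  have ex3 : xk k - 1 = 2 * k%:R by rewrite /xk ?natrD ?natrM; ring.
  have ex4 : (xk k - 1) * (xk k - 2) ^+ s = 2 * (k%:R * xk k.-1 ^+ s).
    case: k {ex1 ex2 PI} ex3 => [|k] ex3; first by rewrite ex3; ring.
    have -> : xk k.+1 - 2 = xk k by rewrite /xk -[k.+1]addn1 ?natrD ?natrM; ring.
    rewrite ex3 /=. ring.
  rewrite ex1 ex2 ex4 in PI.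
  have ex5 : (2 * k + 1)%:R = xk k by [].
  have ex6 : (2 * w.+1 = (w.*2).+2)%N by lia.
  rewrite ex5 ex6 /E. 
  have ex7 : forall j, (2 * (w - j) = (w - j).*2)%N by move=> j; lia.
  under eq_bigr => j _ do rewrite ex7.
  rewrite intrD intrM /=.
  move: PI.
  move: (\sum_(j < w.+1) (ecoef j.+1 s)%:R * xk k ^+ (w - j).*2) => Sm.
  rewrite !(exprS (xk k) (w.*2).+1). move: (xk k ^+ s) => Xs. move: (xk k.+1 ^+ s) (k.+1%:R : F) (k%:R * xk k.-1 ^+ s) => a b c H.
  have H2 : 2 * (b * a) = 2 * b * a + 2 * c - 2 * c by ring.
  rewrite H in H2.
  rewrite mulrBr mulrDr H2. ring.
have T2 : \sum_(k < p) Df k * (4 * (E k - z%:~R * xk k ^+ (2 * w.+1))) = 0.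
  rewrite -[RHS](mulr0 (2 : F)) -[in RHS]T mulr_sumr; apply: eq_bigr => k _.
  by rewrite -hG; ring.
have X1 : \sum_(k < p) Df k * E k = \sum_(j < w.+1) (ecoef j.+1 s)%:R * Sf (w - j).
  rewrite /E /Sf; under eq_bigr => k _ do rewrite mulr_sumr.
  rewrite exchange_big; apply: eq_bigr => j _; rewrite mulr_sumr; apply: eq_bigr => k _; ring.
have X2 : \sum_(k < p) Df k * (z%:~R * xk k ^+ (2 * w.+1)) = z%:~R * Sf w.+1.
  rewrite /Sf mulr_sumr; apply: eq_bigr => k _; ring.
have T3 : 4 * (\sum_(j < w.+1) (ecoef j.+1 s)%:R * Sf (w - j) - z%:~R * Sf w.+1) = 0.
  rewrite -X1 -X2 -[RHS]T2 mulrBr !mulr_sumr -sumrB; apply: eq_bigr => k _; ring.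
apply/eqP; rewrite eq_sym -subr_eq0; apply/eqP.
move/eqP: T3; rewrite mulf_eq0 => /orP [H|/eqP //].
by move: (mulf_neq0 two_neq0 two_neq0); rewrite (_ : (2 * 2 : F) = 4) ?H //; ring.
Qed.
End Fp.
Local Open Scope ring_scope.

Lemma hockey n j : (\sum_(k < n) 'C(k + j, j.*2) = 'C(n + j, (j.*2).+1))%N.
Proof.
elim: n => [|n IH]; first by rewrite big_ord0 bin_small //=; lia.
rewrite big_ord_recr /= IH addSn binS. by rewrite addnC.
Qed.

Section Fp2.
Variable p : nat.
Hypothesis pr : prime p.
Hypothesis po : odd p.
Local Notation F := 'F_p.

Lemma natF_neq0 n : (0 < n < p)%N -> (n%:R : F) != 0.
Proof.
move=> /andP [n0 np].
rewrite -(dvdn_pcharf (pchar_Fp pr)).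
apply/negP => /(dvdn_leq n0); lia.
Qed.

Lemma natF_eq0 n : (p %| n)%N -> (n%:R : F) = 0.
Proof. by move=> H; apply/eqP; rewrite -(dvdn_pcharf (pchar_Fp pr)). Qed.

Lemma factF_neq0 n : (n < p)%N -> (n`!%:R : F) != 0.
Proof.
elim: n => [|n IH] H; first by rewrite fact0 oner_eq0.
rewrite factS natrM mulf_neq0 ?IH ?natF_neq0 //; lia.
Qed.

Lemma binF_vanish1 j : ((j.*2).+1 < p)%N -> ('C(p + j, (j.*2).+1)%:R : F) = 0.
Proof.
move=> H.
have le : ((j.*2).+1 <= p + j)%N by lia.
have := bin_fact le.
move/(congr1 (fun n => (n%:R : F))).
rewrite (@natF_eq0 (p + j)`!); last by apply: dvdn_fact; rewrite prime_gt0 //=; lia.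
rewrite natrM natrM => /eqP; rewrite mulf_eq0 mulf_eq0 => /orP [/eqP //|/orP [H1|H1]].
  by move: H1; rewrite (negbTE (factF_neq0 _)) //; lia.
by move: H1; rewrite (negbTE (factF_neq0 _)) //; lia.
Qed.

Lemma binF_vanish2 j : (p <= j.*2)%N -> (j < p)%N -> ('C(j.*2, j)%:R : F) = 0.
Proof.
move=> H1 H2.
have le : (j <= j.*2)%N by lia.
have := bin_fact le.
move/(congr1 (fun n => (n%:R : F))).
rewrite (@natF_eq0 (j.*2)`!); last by apply: dvdn_fact; rewrite prime_gt0 //=.
rewrite natrM natrM => /eqP; rewrite mulf_eq0 mulf_eq0 => /orP [/eqP //|/orP [H3|H3]].
  by move: H3; rewrite (negbTE (factF_neq0 _)) //; lia.
by move: H3; rewrite (negbTE (factF_neq0 _)) //; lia.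
Qed.

Lemma binF_pm1 i : (i < p)%N -> ('C(p.-1, i)%:R : F) = (-1) ^+ i.
Proof.
elim: i => [|i IH] H; first by rewrite bin0 expr0.
have := mul_bin_left p.-1 i.
move/(congr1 (fun n => (n%:R : F))).
rewrite !natrM IH; last by lia.
have e : ((p.-1 - i)%:R : F) = - (i.+1)%:R.
  apply/eqP; rewrite -subr_eq0 opprK -natrD.
  apply/eqP/natF_eq0. have -> : (p.-1 - i + i.+1 = p)%N by lia. by [].
rewrite e => H2.
apply: (@mulfI _ (i.+1%:R : F)); first by apply: natF_neq0; lia.
by rewrite H2 exprS; ring.
Qed.

Lemma binF_one i : (i < p)%N -> ('C(p + i, i)%:R : F) = 1.
Proof.
elim: i => [|i IH] H; first by rewrite bin0.
have := mul_bin_diag (p + i.+1) i.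
move/(congr1 (fun n => (n%:R : F))).
have e : ((p + i.+1).-1 = p + i)%N by lia.
rewrite e !natrM IH; last by lia.
rewrite natrD p0 // add0r mulr1 => H2.
apply: (@mulfI _ (i.+1%:R : F)); first by apply: natF_neq0; lia.
by rewrite -H2 mulr1.
Qed.


Lemma baseF (z : int) : Sf p z 0 = (- (z%:~R : F)) ^+ p./2.
Proof.
have pm : p = (p./2).*2.+1 by rewrite -[p in LHS]odd_double_half po add1n.
set m := p./2 in pm *.
have mp : (m < p)%N by lia.
rewrite /Sf.
have E1 : forall k : 'I_p, xk p k ^+ (2 * 0) * Df p z k
   = \sum_(j < p) ('C(j.*2, j) * 'C(k + j, j.*2))%:R * (z%:~R : F) ^+ j.
  move=> k; rewrite muln0 expr0 mul1r /Df (@delannoyEN p) // rmorph_sum.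
  by apply: eq_bigr => j _; rewrite /FD rmorphM rmorph_nat rmorphXn.
rewrite (eq_bigr _ (fun k _ => E1 k)) exchange_big /=.
have E2 : forall j : 'I_p, \sum_(k < p) ('C(j.*2, j) * 'C(k + j, j.*2))%:R * (z%:~R : F) ^+ j
   = ('C(j.*2, j) * 'C(p + j, (j.*2).+1))%:R * (z%:~R : F) ^+ j.
  move=> j; rewrite -mulr_suml -natr_sum -big_distrr /= hockey //.
rewrite (eq_bigr _ (fun j _ => E2 j)).
rewrite (bigD1 (Ordinal mp)) //= big1 ?addr0; last first.
  move=> j /eqP jm. 
  have jm' : (j : nat) <> m by move=> H; apply: jm; apply: val_inj.
  have [lt|ge] := ltnP (j.*2).+1 p.
    by rewrite natrM binF_vanish1 // mulr0 mul0r.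
  by rewrite natrM binF_vanish2 ?mul0r //; lia.
rewrite natrM.
have -> : 'C(p + m, m.*2.+1) = 'C(p + m, m).
  transitivity 'C(p + m, p + m - m); last by rewrite bin_sub // leq_addl.
  f_equal; lia.
have -> : m.*2 = p.-1 by lia.
rewrite binF_pm1 // binF_one // mulr1 -exprMn; congr (_ ^+ _); ring.
Qed.
End Fp2.
Local Open Scope ring_scope.

Section Euler.
Variable p : nat.
Hypothesis pr : prime p.
Hypothesis po : odd p.
Local Notation F := 'F_p.

Lemma fermatF (y : F) : y != 0 -> y ^+ p.-1 = 1.
Proof.
move=> y0; have := expf_card y; rewrite card_Fp //.
have -> : y ^+ p = y * y ^+ p.-1 by rewrite -exprS prednK // prime_gt0.
by move=> H; apply: (mulfI y0); rewrite H mulr1.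
Qed.

Lemma prim_exists : exists g : F, (p.-1).-primitive_root g.
Proof.
have n0 : (0 < p.-1)%N by have := prime_gt1 pr; lia.
have H1 : all (p.-1).-unity_root (enum (predC1 (0 : F))).
  apply/allP => x; rewrite mem_enum /= => x0.
  by rewrite unity_rootE fermatF.
have H2 : leq p.-1 (size (enum (predC1 (0 : F)))).

  by rewrite -cardE (cardC1 (0 : F)) card_Fp.
have := @has_prim_root F p.-1 (enum (predC1 (0 : F))) n0 H1 (enum_uniq _) H2.
move/hasP => [g _ Hg]; by exists g.
Qed.

Lemma euler_sq (a : F) : a != 0 -> (a ^+ p./2 == 1) = [exists y : F, y ^+ 2 == a].
Proof.
move=> a0.
have pm : p = (p./2).*2.+1 by rewrite -[p in LHS]odd_double_half po add1n.
set m := p./2 in pm *.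
have pm1 : p.-1 = (2 * m)%N by rewrite pm /=; lia.
apply/idP/existsP.
  move=> /eqP am.
  have [g Hg] := prim_exists.
  have [i0 ai0] := prim_rootP Hg (fermatF a0).
  move: ai0; move: (nat_of_ord i0) => i ai.
  have : (p.-1 %| i * m)%N by rewrite (prim_order_dvd Hg) exprM -ai am.
  rewrite pm1 dvdn_pmul2r; last first.
    have := prime_gt1 pr; lia.
  move=> /dvdnP [k ik].
  exists (g ^+ k); apply/eqP; rewrite ai ik -exprM mulnC.
  done.
move=> [y /eqP ya].
have y0 : y != 0 by apply: contraNneq a0 => y0; rewrite -ya y0 expr0n.
by rewrite -ya -exprM -pm1 fermatF.
Qed.

Lemma euler_nsq (a : F) : a != 0 -> ~~ [exists y : F, y ^+ 2 == a] -> a ^+ p./2 = -1.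
Proof.
move=> a0; rewrite -euler_sq // => H.
have pm : p = (p./2).*2.+1 by rewrite -[p in LHS]odd_double_half po add1n.
have : (a ^+ p./2) ^+ 2 == 1.
  have e : p.-1 = (p./2).*2 by rewrite {1}pm.
  by rewrite -exprM mulnC mul2n -(fermatF a0) e.
by rewrite sqrf_eq1 (negbTE H) => /eqP.
Qed.


Lemma legendreF (a : int) : ~~ (p %| a)%Z -> ((legendre a p)%:~R : F) = (a%:~R : F) ^+ p./2.
Proof.
move=> pa.
have ch := pchar_Fp pr.
have a0 : (a%:~R : F) != 0 by rewrite -(dvdz_pcharf ch).
rewrite /legendre (negbTE pa).
case: ifP => [/existsP [x Hx]|Hn].
  have : [exists y : F, y ^+ 2 == a%:~R].
    apply/existsP; exists ((x : nat)%:R).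
    move: Hx; rewrite (dvdz_pcharf ch) rmorphB rmorphXn /= subr_eq0.
    by [].
  by rewrite -euler_sq // => /eqP ->.
rewrite euler_nsq ?rmorphN1 //.
apply/negP => /existsP [y /eqP Hy].
move/negbT/negP: Hn; apply; apply/existsP.
have yp : (y < p)%N.
  have h := ltn_ord y; have e := Fp_cast pr.
  move: h; move: (nat_of_ord y) => n. by rewrite e.
exists (Ordinal yp).
rewrite (dvdz_pcharf ch) rmorphB rmorphXn /= subr_eq0.
rewrite [X in X ^+ 2](_ : _ = y) ?Hy //. exact: natr_Zp.
Qed.
End Euler.
Local Open Scope ring_scope.

Lemma size_cs w n : size (cs w n) = n.+1.
Proof. by elim: n => [|n IH] //=; rewrite size_rcons IH. Qed.

Lemma nth_cs w n i : (i <= n)%N -> (cs w n)`_i = (cs w i)`_i.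
Proof.
elim: n => [|n IH] H; first by have -> : i = 0%N by lia.
have [lt|eq] := ltnP i n.+1.
  by rewrite /= nth_rcons size_cs lt IH.
have -> : i = n.+1 by lia. by [].
Qed.

Lemma cs_rec w0 w : (cs w0 w.+1)`_w.+1
  = w0 * \sum_(j < w.+1) (ecoef j.+1 (w.*2).+1)%:R * (cs w0 (w - j))`_(w - j).
Proof.
rewrite /= nth_rcons size_cs ltnn eqxx /c_step size_cs big_add1 /= big_mkord.
have -> : (2 * w.+1 - 1 = (w.*2).+1)%N by lia.
congr (_ * _); apply: eq_bigr => j _.
have -> : (w.+1 - j.+1 = w - j)%N by lia.
by rewrite nth_cs //; lia.
Qed.

Lemma sum_shift (R : zmodType) (F : nat -> R) n :
  \sum_(1 <= j < n.+1) F j = \sum_(j < n) F j.+1.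
Proof. by rewrite big_add1 /= big_mkord. Qed.

Lemma intrXn (R : ringType) (x : int) n : ((x ^+ n)%:~R : R) = (x%:~R) ^+ n.
Proof. exact: rmorphXn. Qed.

Lemma intrnat (R : ringType) n : (((n%:R : int))%:~R : R) = n%:R.
Proof. exact: mulrz_nat. Qed.

Lemma intrSum (R : ringType) n (G : 'I_n -> int) : ((\sum_(i < n) G i)%:~R : R) = \sum_(i < n) (G i)%:~R.
Proof. exact: rmorph_sum. Qed.

Section Main.
Variable p : nat.
Hypothesis pr : prime p.
Hypothesis po : odd p.
Local Notation F := 'F_p.
Variable z : int.
Hypothesis hz : z != 0.

Definition Lg : F := (- (z%:~R : F)) ^+ p./2.
Definition Nn v := numq (cc z v * (z%:~R : rat) ^+ v).

Lemma zpow_split (R : ringType) (x : R) w j : (j <= w)%N -> x ^+ w = x ^+ j * x ^+ (w - j).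
Proof. by move=> H; rewrite -exprD subnKC. Qed.

Lemma main_ind v : cc z v * (z%:~R : rat) ^+ v = (Nn v)%:~R /\
   (z%:~R : F) ^+ v * Sf p z v = (Nn v)%:~R * Lg.
Proof.
elim/ltn_ind: v => v IH.
case: v IH => [|w] IH.
  rewrite /Nn /cc /= expr0 mulr1.
  have -> : numq 1 = 1 by [].
  by rewrite rmorph1 mul1r mul1r baseF.
pose M : int := \sum_(j < w.+1) (ecoef j.+1 (w.*2).+1)%:R * z ^+ j * Nn (w - j).
have hq : cc z w.+1 * (z%:~R : rat) ^+ w.+1 = M%:~R.
  rewrite /cc cs_rec /M intrSum mulr_sumr mulr_suml. apply: eq_bigr => j _.
  have hj : (j <= w)%N by rewrite -ltnS.
  have [IHq _] := IH (w - j)%N (leq_ltn_trans (leq_subr j w) (ltnSn w)).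
  rewrite !intrM intrXn intrnat -IHq /cc.
  have zq : (z%:~R : rat) != 0 by rewrite intr_eq0.
  rewrite exprS (zpow_split _ hj).
  set c := (cs _ _)`_(w - j).
  move: (z%:~R : rat) zq ((z%:~R : rat) ^+ j) ((z%:~R : rat) ^+ (w - j)) => y y0 a b.
  by field.
have NM : Nn w.+1 = M by rewrite /Nn hq numq_int.
split; first by rewrite NM.
rewrite NM exprSr -mulrA stepF // mulr_sumr /M intrSum mulr_suml.
apply: eq_bigr => j _.
have hj : (j <= w)%N by rewrite -ltnS.
have [_ IHf] := IH (w - j)%N (leq_ltn_trans (leq_subr j w) (ltnSn w)).
rewrite !intrM intrXn intrnat (zpow_split _ hj).
rewrite -[RHS]mulrA -IHf.
ring.
Qed.
End Main.

Lemma gauss_pow (p : nat) (z n : int) v : coprimez p z -> (p %| n * z ^+ v)%Z -> (p %| n)%Z.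
Proof.
move=> cz; elim: v n => [|v IH] n; first by rewrite expr0 mulr1.
by rewrite exprSr mulrA Gauss_dvdzl // => /IH.
Qed.

Lemma part1 (p v : nat) (z : int) : prime p -> odd p -> (gcdz p%:Z z == 1)%N ->
     ratcong p ((\sum_(k < p) ((2 * k + 1) ^ (2 * v))%N%:R * delannoy k z : int)%:~R)
               (cc z v * (legendre (- z) p)%:~R).
Proof.
move=> pr po g1.
have p1 : (1 < p)%N := prime_gt1 pr.
have hz : z != 0.
  by apply: contraTneq g1 => ->; rewrite gcdz0 /=; lia.
have pa : ~~ (p %| - z)%Z.
  apply/negP => H.
  have Hz : (p %| z)%Z by move: H; rewrite !dvdzE abszN.
  have : (p %| gcdz p z)%Z by rewrite dvdz_gcd dvdzz Hz.
  rewrite (eqP g1) dvdz1 /=. lia.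
set S : int := \sum_(k < p) _.
set L' := legendre (- z) p.
have [Hq Hf] := main_ind pr po hz v.
have ch := pchar_Fp pr.
have SF : (S%:~R : 'F_p) = Sf p z v.
  rewrite /S intrSum; apply: eq_bigr => k _.
  by rewrite intrM intrnat natrX.
have LF : (L'%:~R : 'F_p) = Lg p z by rewrite /L' legendreF // /Lg rmorphN.
set a : int := z ^+ v * S - Nn z v * L'.
have pa0 : (p %| a)%Z.
  rewrite (dvdz_pcharf ch) /a intrB !intrM intrXn SF Hf LF subrr //.
rewrite /ratcong.
set x := S%:~R - _.
have xa : x * ((z ^+ v)%:~R) = a%:~R.
  rewrite /x /a intrB !intrM intrXn mulrBl -mulrA [L'%:~R * _]mulrC mulrA Hq mulrC //.

have dx : (denq x)%:~R != 0 :> rat by rewrite intr_eq0 denq_neq0.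
have key : numq x * z ^+ v = a * denq x.
  apply: (@intr_inj rat). rewrite !intrM intrXn -xa -{2}(divq_num_den x).
  rewrite intrXn. by field.
apply: (@gauss_pow p z _ v); first by [].
by rewrite key dvdz_mulr.
Qed.

Unset Implicit Arguments.

Theorem theorem1p2 (p : nat) (v : nat) (z : int) :
  prime p -> odd p -> z != 0 -> z != -1 ->
  ((gcdz p%:Z z == 1)%N ->
     ratcong p ((\sum_(k < p) ((2 * k + 1) ^ (2 * v))%N%:R * delannoy k z : int)%:~R)
               (cc z v * (legendre (- z) p)%:~R)) /\
  ((gcdz p%:Z (z + 1) == 1)%N ->
     ratcong p ((\sum_(k < p) (-1) ^+ k * ((2 * k + 1) ^ (2 * v))%N%:R * delannoy k z : int)%:~R)
               (cct z v * (legendre (z + 1) p)%:~R)).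
Proof.
move=> pr po hz hz1; split; first exact: part1.
move=> g1.
have e : -1 - z = - (z + 1) by ring.
have := @part1 p v (-1 - z) pr po.
rewrite e gcdzN opprK => /(_ g1).
have -> : cc (- (z + 1)) v = cct z v by rewrite /cc /cct intrN invrN.
have -> : \sum_(k < p) ((2 * k + 1) ^ (2 * v))%N%:R * delannoy k (- (z + 1))
   = \sum_(k < p) (-1) ^+ k * ((2 * k + 1) ^ (2 * v))%N%:R * delannoy k z.
  apply: eq_bigr => k _; rewrite -e delannoy_refl; ring.
by [].
Qed.
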